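(* For every finite rooted forest $F$, the sequence of coefficients of the descent polynomial $A_F(q)$ is unimodal, i.e. writing $A_F(q)=\sum_{k=0}^{e}a_kq^k$ (with $e$ the number of edges of $F$), there is an index $j$ with $a_0\le a_1\le\cdots\le a_j\ge a_{j+1}\ge\cdots\ge a_e$.
   Context: A rooted forest $F$ is a finite disjoint union of rooted trees; each non-root vertex $v$ has a unique parent. A labeling of $F$ with $n$ vertices is a bijection $w: V(F)\to\{1,\dots,n\}$; $\mathcal{W}(F)$ denotes the set of all $n!$ labelings. The descent set is $\mathrm{Des}(F,w)=\{v\in V(F): v \text{ has a parent } u \text{ and } w(v)>w(u)\}$, and $\mathrm{des}(F,w)=|\mathrm{Des}(F,w)|$. The descent polynomial is $A_F(q)=\sum_{w\in\mathcal{W}(F)} q^{\mathrm{des}(F,w)}$. *)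

(* Defs.v *)
From mathcomp Require Import all_boot  .
Set Implicit Arguments. Unset Strict Implicit. Unset Printing Implicit Defensive.

(* A rooted forest on the finite vertex type V is given by a parent map:
   [parent v = Some u] means u is the parent of v, [None] means v is a root. *)
Definition is_rooted_forest (V : finType) (parent : V -> option V) : Prop :=
  forall v : V, exists k : nat, iter k (obind parent) (Some v) = None.

(* Labelings: bijections V -> {1..|V|}, represented (shifted by one) as
   bijections V -> 'I_#|V|, i.e. V-indexed injective maps. *)
Definition descent (V : finType) (parent : V -> option V)
  (w : V -> nat) (v : V) : bool :=
  if parent v is Some u then w u < w v else false.

Definition des (V : finType) (parent : V -> option V) (w : V -> nat) : nat :=
  #|[pred v | descent parent w v]|.

Definition nedges (V : finType) (parent : V -> option V) : nat :=
  #|[pred v : V | parent v != None]|.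

Definition desc_coef (V : finType) (parent : V -> option V) (k : nat) : nat :=
  #|[pred w : {ffun V -> 'I_#|V|} | injectiveb w &&
       (des parent (fun v => nat_of_ord (w v)) == k)]|.

Definition unimodal_upto (a : nat -> nat) (e : nat) : Prop :=
  exists2 j, j <= e &
    (forall i, i < j -> a i <= a i.+1) /\ (forall i, j <= i -> i < e -> a i.+1 <= a i).

(* Main.v *)
Require Import Defs.
From mathcomp Require Import all_boot.
From mathcomp Require Import zify.
Set Implicit Arguments. Unset Strict Implicit. Unset Printing Implicit Defensive.

Definition pin (V : eqType) (parent : V -> option V) (S : seq V) v : bool :=
  if parent v is Some p then p \in S else false.
Definition edges (V : eqType) (parent : V -> option V) S := count (pin parent S) S.
Definition dpred (V : eqType) (parent : V -> option V) (t : seq V) v : bool :=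
  if parent v is Some p then (p \in t) && (index p t < index v t) else false.
Definition desL (V : eqType) (parent : V -> option V) t := count (dpred parent t) t.
Definition chl (V : eqType) (parent : V -> option V) x S :=
  count (fun v => parent v == Some x) S.

Fixpoint ordsn (V : eqType) n (S : seq V) : seq (seq V) :=
  if n is n'.+1 then flatten [seq [seq x :: t | t <- ordsn n' (rem x S)] | x <- S]
  else [:: [::]].
Definition ords (V : eqType) (S : seq V) := ordsn (size S) S.
Definition Acoef (V : eqType) (parent : V -> option V) S k :=
  count (fun t => desL parent t == k) (ords S).

Lemma count_split (T : eqType) (a b c : pred T) s :
  {in s, forall v, (a v : nat) = b v + c v} -> count a s = count b s + count c s.
Proof.
elim: s => //= x s IH H.
rewrite IH; last by move=> v vs; apply: H; rewrite inE vs orbT.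
rewrite H ?mem_head //; lia.
Qed.

Lemma ordsn_mem (V : eqType) n (S : seq V) : size S = n ->
  forall t, (t \in ordsn n S) = perm_eq t S.
Proof.
elim: n S => [|n IH] S hS t /=.
  move/size0nil: hS => ->; rewrite inE; apply/eqP/perm_nilP => //.
apply/flatten_mapP/idP.
  case=> x xS /mapP [t' Ht' ->].
  have hr : size (rem x S) = n by rewrite size_rem // hS.
  rewrite (IH _ hr) in Ht'.
  have := perm_to_rem xS; rewrite perm_sym => H.
  by apply: perm_trans H; rewrite perm_cons.
move=> Hp.
case: t Hp => [|x t'] Hp.
  by move: (perm_size Hp); rewrite hS.
have xS : x \in S by rewrite -(perm_mem Hp) mem_head.
exists x => //; apply/mapP; exists t' => //.
have hr : size (rem x S) = n by rewrite size_rem // hS.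
rewrite (IH _ hr) -(perm_cons x).
exact: perm_trans Hp (perm_to_rem xS).
Qed.

Lemma flat_uniq (V : eqType) (f : V -> seq (seq V)) s : uniq s ->
  (forall x, uniq (f x)) ->
  uniq (flatten [seq [seq x :: t | t <- f x] | x <- s]).
Proof.
move=> us uf; elim: s us => //= x s IH /andP [xs us].
have inj : injective (cons x) by move=> a b [].
rewrite cat_uniq IH // andbT (map_inj_uniq inj) uf /=.
apply/hasP => -[t /flatten_mapP [y ys /mapP [t' _ ->]] /mapP [t'' _ [eyx _]]].
by move: xs; rewrite -eyx ys.
Qed.

Lemma ordsn_uniq (V : eqType) n (S : seq V) : uniq S -> uniq (ordsn n S).
Proof.
elim: n S => [|n IH] S uS //=.
apply: flat_uniq => // x; apply: IH; exact: rem_uniq.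
Qed.

Lemma flat_size (V : eqType) (f : V -> seq (seq V)) s c :
  {in s, forall x, size (f x) = c} ->
  size (flatten [seq [seq x :: t | t <- f x] | x <- s]) = size s * c.
Proof.
elim: s => //= x s IH H; rewrite size_cat size_map H ?mem_head // IH //.
by move=> y ys; apply: H; rewrite inE ys orbT.
Qed.

Lemma ordsn_size (V : eqType) n (S : seq V) : size S = n -> size (ordsn n S) = n`!.
Proof.
elim: n S => [|n IH] S hS //=.
rewrite (@flat_size _ _ _ n`!) ?hS ?factS //.
by move=> x xS; apply: IH; rewrite size_rem // hS.
Qed.

Lemma desL_cons (V : eqType) (parent : V -> option V) x t : x \notin t ->
  desL parent (x :: t) = chl parent x t + desL parent t.
Proof.
move=> xt; rewrite /desL /= /dpred /=.
have -> : (if parent x is Some p then (p \in x :: t) && (index p (x :: t) < (if x == x then 0 else (index x t).+1)) else false) = false.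
  by case: (parent x) => // p; rewrite eqxx ltn0 andbF.
rewrite add0n; apply: count_split => v vt.
have vx : (x == v) = false by apply/eqP => e; move: xt; rewrite e vt.
rewrite vx; case: (parent v) => [p|] //=.
rewrite inE; case: (eqVneq x p) => [<-|xp] /=.
  by rewrite eqxx (negbTE xt).
have -> : (Some p == Some x) = false by apply/eqP => -[e]; move: xp; rewrite e eqxx.
by rewrite ltnS.
Qed.

Lemma pcount (T : eqType) (a : pred T) s1 s2 : perm_eq s1 s2 -> count a s1 = count a s2.
Proof. by move/permP. Qed.

Lemma index_rev (V : eqType) (t : seq V) x : uniq t -> x \in t ->
  index x (rev t) = size t - (index x t).+1.
Proof.
move=> ut xt.
have hi : index x t < size t by rewrite index_mem.
have hlt : size t - (index x t).+1 < size (rev t) by rewrite size_rev; lia.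
rewrite -{1}(nth_index x xt).
have -> : nth x t (index x t) = nth x (rev t) (size t - (index x t).+1).
  rewrite nth_rev ?size_rev //; last by lia.
  congr nth; lia.
by rewrite index_uniq // rev_uniq.
Qed.

Lemma desL_rev (V : eqType) (parent : V -> option V) t :
  (forall v, parent v != Some v) -> uniq t ->
  desL parent t + desL parent (rev t) = edges parent t.
Proof.
move=> nl ut; rewrite /desL count_rev /edges.
symmetry; apply: count_split => v vt.
rewrite /pin /dpred; case E: (parent v) => [p|] //.
rewrite mem_rev; case pt: (p \in t) => //=.
rewrite !index_rev //.
have pv : p != v by apply/eqP => e; move: (nl v); rewrite E e eqxx.
have : index p t != index v t by apply: contra pv => /eqP e; apply/eqP; exact: (index_inj p pt vt e).
have : index p t < size t by rewrite index_mem.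
have : index v t < size t by rewrite index_mem.
move=> h1 h2 /eqP h3.
case: (ltngtP (index p t) (index v t)) => h; try lia.
Qed.

Lemma edges_perm (V : eqType) (parent : V -> option V) t S :
  perm_eq t S -> edges parent t = edges parent S.
Proof.
move=> p; rewrite /edges (pcount _ p); apply: eq_count => v.
by rewrite /pin; case: (parent v) => // q; rewrite (perm_mem p).
Qed.

Lemma edges_rem (V : eqType) (parent : V -> option V) S x : uniq S -> x \in S ->
  edges parent S = pin parent S x + chl parent x (rem x S) + edges parent (rem x S).
Proof.
move=> uS xS; rewrite {1}/edges (pcount _ (perm_to_rem xS)) /= -addnA.
congr addn; rewrite /chl /edges; apply: count_split => v vr.
have xr : x \in rem x S = false by apply: mem_rem_uniqF.
rewrite /pin; case: (parent v) => [p|] //.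
have -> : (p \in S) = (p == x) || (p \in rem x S) by rewrite (perm_mem (perm_to_rem xS)) inE.
case: (eqVneq p x) => [->|px] /=; first by rewrite eqxx xr.
have -> : (Some p == Some x) = false by apply/eqP => -[]; apply/eqP.
by [].
Qed.

Lemma desL_le (V : eqType) (parent : V -> option V) t :
  (forall v, parent v != Some v) -> uniq t -> desL parent t <= edges parent t.
Proof. by move=> nl ut; rewrite -(desL_rev nl ut) leq_addr. Qed.

Lemma Acoef_sym (V : eqType) (parent : V -> option V) S k :
  (forall v, parent v != Some v) -> uniq S -> k <= edges parent S ->
  Acoef parent S k = Acoef parent S (edges parent S - k).
Proof.
move=> nl uS hk; rewrite /Acoef /ords.
have up := ordsn_uniq (size S) uS.
have pr : perm_eq (ordsn (size S) S) (map rev (ordsn (size S) S)).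
  apply: uniq_perm => //; first by rewrite (map_inj_uniq (can_inj (@revK _))).
  move=> t; apply/idP/idP => ht.
    apply/mapP; exists (rev t); last by rewrite revK.
    rewrite ordsn_mem //; rewrite ordsn_mem // in ht.
    by apply: perm_trans ht; apply/permPl; apply: perm_rev.
  case/mapP: ht => t' ht' ->; rewrite ordsn_mem //; rewrite ordsn_mem // in ht'.
  by apply: perm_trans ht'; apply/permPl; apply: perm_rev.
rewrite (pcount _ pr) count_map; apply: eq_in_count => t ht.
have ptS : perm_eq t S by rewrite -(@ordsn_mem _ (size S)).
have ut : uniq t by rewrite (perm_uniq ptS).
have := desL_rev nl ut; have := desL_le nl ut; rewrite (edges_perm _ ptS) /= => h1 h2.
apply/eqP/eqP => h; lia.
Qed.

Lemma Acoef_rec (V : eqType) (parent : V -> option V) S n k :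
  uniq S -> size S = n.+1 ->
  Acoef parent S k = \sum_(x <- S)
     count (fun t => chl parent x (rem x S) + desL parent t == k) (ords (rem x S)).
Proof.
move=> uS hS; rewrite /Acoef /ords hS /= count_flatten sumnE big_map big_map.
rewrite [LHS]big_seq [RHS]big_seq; apply: eq_bigr => x xS.
have hr : size (rem x S) = n by rewrite size_rem // hS.
rewrite count_map hr; apply: eq_in_count => t ht /=.
rewrite (ordsn_mem hr) in ht.
have xt : x \notin t by rewrite (perm_mem ht) mem_rem_uniqF.
by rewrite desL_cons // /chl (pcount _ ht).
Qed.

Lemma Acoef_step (V : eqType) (parent : V -> option V) :
  (forall v, parent v != Some v) ->
  forall n S, size S = n -> uniq S -> forall k, 2 * k + 1 <= edges parent S ->
  Acoef parent S k <= Acoef parent S k.+1.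
Proof.
move=> nl; elim=> [|n IH] S hS uS k hk.
  by move/size0nil: hS => E; subst S; rewrite /edges /= addn1 in hk.
have [hk2|hk2] := leqP (2 * k + 2) (edges parent S); last first.
  have -> : k.+1 = edges parent S - k by lia.
  by rewrite -Acoef_sym //; lia.
rewrite !(Acoef_rec _ _ uS hS) big_seq [X in _ <= X]big_seq.
apply: leq_sum => x xS.
have he := edges_rem parent uS xS.
set S' := rem x S in he *; set c := chl parent x S' in he *.
have hr : size S' = n by rewrite size_rem // hS.
have uS' : uniq S' by apply: rem_uniq.
have hpin : pin parent S x <= 1 by case: (pin parent S x).
have [hc|hc] := leqP c k; last first.
  rewrite (@eq_count _ _ pred0) ?count_pred0 // => t /=.
  apply/eqP; lia.
have -> : count (fun t => c + desL parent t == k) (ords S') = Acoef parent S' (k - c).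
  by apply: eq_count => t; apply/eqP/eqP; lia.
have -> : count (fun t => c + desL parent t == k.+1) (ords S') = Acoef parent S' (k - c).+1.
  by apply: eq_count => t; apply/eqP/eqP; lia.
apply: IH => //; lia.
Qed.

Lemma forest_noloop (V : finType) (parent : V -> option V) :
  is_rooted_forest parent -> forall v, parent v != Some v.
Proof.
move=> hf v; apply/eqP => e; case: (hf v) => k.
suff -> : iter k (obind parent) (Some v) = Some v by [].
by elim: k => //= k ->; rewrite /= e.
Qed.

Lemma card_count (V : finType) (P : pred V) : #|[pred v | P v]| = count P (enum V).
Proof.
rewrite -size_filter.
have /card_uniqP <- : uniq (filter P (enum V)) by apply: filter_uniq; apply: enum_uniq.
by apply: eq_card => v; rewrite mem_filter mem_enum andbT.
Qed.

Definition wof (V : finType) (t : seq V) : {ffun V -> 'I_#|V|} :=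
  [ffun v => insubd (enum_rank v) (index v t)].

Lemma wofE (V : finType) (t : seq V) v : perm_eq t (enum V) ->
  nat_of_ord (wof t v) = index v t.
Proof.
move=> pt; rewrite /wof ffunE val_insubd.
have -> : index v t < #|V| by rewrite cardE -(perm_size pt) index_mem (perm_mem pt) mem_enum.
by [].
Qed.

Lemma desc_coefE (V : finType) (parent : V -> option V) k :
  desc_coef parent k = Acoef parent (enum V) k.
Proof.
set L := map (@wof V) (ords (enum V)).
have memo : forall t, (t \in ords (enum V)) = perm_eq t (enum V) by move=> t; rewrite /ords ordsn_mem.
have winj : forall t, t \in ords (enum V) -> injectiveb (wof t).
  move=> t; rewrite memo => pt; apply/injectiveP => u v /(congr1 val).
  rewrite /= !wofE // => e; apply: (index_inj u _ _ e); by rewrite (perm_mem pt) mem_enum.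
have uL : uniq L.
  rewrite map_inj_in_uniq; first by apply: ordsn_uniq; apply: enum_uniq.
  move=> t1 t2; rewrite !memo => p1 p2 e.
  have ei : forall v, index v t1 = index v t2 by move=> v; rewrite -!wofE // e.
  have hs : size t1 = size t2 by rewrite (perm_size p1) (perm_size p2).
  clear e; case: t1 p1 ei hs => [|x0 r] p1 ei hs; first by case: t2 hs {p2 ei}.
  apply: (@eq_from_nth _ x0) => // i hi.
  set v := nth x0 (x0 :: r) i.
  have vin : v \in x0 :: r by apply: mem_nth.
  have := nth_index x0 vin; rewrite index_uniq //; last by rewrite (perm_uniq p1) enum_uniq.
  move=> h; rewrite -{1}h /v.
  have vin2 : v \in t2 by rewrite (perm_mem p2) -(perm_mem p1).
  by rewrite -[X in nth _ t2 X](index_uniq x0 hi) ?(perm_uniq p1) ?enum_uniq // -/v ei nth_index.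
have sL : size L = #|V|`! by rewrite size_map /ords ordsn_size // -cardE.
have memL : forall w, (w \in L) = injectiveb w.
  have hc : #|L| = #|[pred w : {ffun V -> 'I_#|V|} | injectiveb w]|.
    rewrite (card_uniqP uL) sL.
    have := card_inj_ffuns V 'I_#|V|; rewrite card_ord ffactnn => <-.
    apply: eq_card => w; by rewrite inE.
  have hsub : L \subset [pred w : {ffun V -> 'I_#|V|} | injectiveb w].
    by apply/subsetP => w /mapP [t ht ->]; rewrite inE winj.
  by move: (subset_cardP hc hsub) => e w; rewrite e.
rewrite /desc_coef.
have -> : #|[pred w : {ffun V -> 'I_#|V|} | injectiveb w && (des parent (fun v => nat_of_ord (w v)) == k)]|
   = count (fun w : {ffun V -> 'I_#|V|} => des parent (fun v => nat_of_ord (w v)) == k) L.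
  rewrite -size_filter.
  have /card_uniqP <- : uniq (filter (fun w : {ffun V -> 'I_#|V|} => des parent (fun v => nat_of_ord (w v)) == k) L) by apply: filter_uniq.
  by apply: eq_card => w; rewrite mem_filter memL inE andbC.
rewrite count_map /Acoef; apply: eq_in_count => t ht /=.
rewrite memo in ht; congr (_ == k).
have ht' : perm_eq (enum V) t by rewrite perm_sym.
rewrite /des card_count (pcount _ ht') /desL; apply: eq_in_count => v vt.
rewrite /descent /dpred; case: (parent v) => // p.
by rewrite !wofE // (perm_mem ht) mem_enum.
Qed.

Theorem theorem2p3 (V : finType) (parent : V -> option V) :
  is_rooted_forest parent ->
  unimodal_upto (desc_coef parent) (nedges parent).
Proof.
move=> hf; have nl := forest_noloop hf.
have hE : nedges parent = edges parent (enum V).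
  rewrite /nedges card_count /edges; apply: eq_count => v.
  by rewrite /pin; case: (parent v) => // p; rewrite mem_enum.
have uS : uniq (enum V) by apply: enum_uniq.
have step := @Acoef_step _ parent nl _ (enum V) erefl uS.
have sym := @Acoef_sym _ parent (enum V) _ nl uS.
rewrite hE; set E := edges parent (enum V) in step sym *.
exists (E %/ 2); first by lia.
split=> i hi; rewrite !desc_coefE.
  by apply: step; lia.
move=> hiE.
rewrite (sym i) ?(sym i.+1); try lia.
have -> : E - i = (E - i.+1).+1 by lia.
by apply: step; lia.
Qed.
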